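(* The free group of rank $2$ is not weakly homogeneous.
   Context: A group $H$ is weakly homogeneous if for every isomorphism $\varphi:A\to B$ between finitely generated subgroups $A,B$ of $H$ such that both $\varphi$ and $\varphi^{-1}:B\to A$ extend to endomorphisms of $H$, the map $\varphi$ extends to an automorphism of $H$. *)

(* Defs.v *)
From mathcomp Require Import all_boot.
Set Implicit Arguments. Unset Strict Implicit. Unset Printing Implicit Defensive.

Section GroupNotions.
Variables (T : Type) (mul : T -> T -> T) (one : T) (inv : T -> T).

Fixpoint inlist (x : T) (s : seq T) : Prop :=
  match s with [::] => False | y :: s' => y = x \/ inlist x s' end.

Inductive gen (s : seq T) : T -> Prop :=
  | gen_elt x : inlist x s -> gen s x
  | gen_one : gen s one
  | gen_mul x y : gen s x -> gen s y -> gen s (mul x y)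
  | gen_inv x : gen s x -> gen s (inv x).

Definition endomorphism (f : T -> T) : Prop :=
  forall x y, f (mul x y) = mul (f x) (f y).

Definition automorphism (f : T -> T) : Prop :=
  endomorphism f /\ exists g : T -> T, (forall x, g (f x) = x) /\ (forall y, f (g y) = y).

(* Weak homogeneity.  A, B range over finitely generated subgroups (A = <sA>,
   B = <sB>); phi : A -> B is an isomorphism with inverse psi : B -> A. *)
Definition weakly_homogeneous : Prop :=
  forall (sA sB : seq T) (phi psi : T -> T),
    (forall x, gen sA x -> gen sB (phi x)) ->
    (forall y, gen sB y -> gen sA (psi y)) ->
    (forall x, gen sA x -> psi (phi x) = x) ->
    (forall y, gen sB y -> phi (psi y) = y) ->
    (forall x y, gen sA x -> gen sA y -> phi (mul x y) = mul (phi x) (phi y)) ->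
    (exists f, endomorphism f /\ forall x, gen sA x -> f x = phi x) ->
    (exists g, endomorphism g /\ forall y, gen sB y -> g y = psi y) ->
    exists h, automorphism h /\ forall x, gen sA x -> h x = phi x.

End GroupNotions.

(* A letter (i, e): generator i (false = a, true = b), e = true means inverse. *)
Definition letter := (bool * bool)%type.
Definition linv (l : letter) : letter := (l.1, ~~ l.2).

Fixpoint reduced (w : seq letter) : bool :=
  match w with
  | x :: ((y :: _) as w') => (y != linv x) && reduced w'
  | _ => true
  end.

Definition push (x : letter) (w : seq letter) : seq letter :=
  match w with
  | y :: w' => if y == linv x then w' else x :: w
  | [::] => [:: x]
  end.

Definition norm (w : seq letter) : seq letter := foldr push [::] w.

Lemma push_reduced x w : reduced w -> reduced (push x w).
Proof.
case: w => [|y w] //= Hw.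
case: ifP => Hy.
  by case: w Hw => [|z w] //= /andP [].
by rewrite /= Hy Hw.
Qed.

Lemma norm_reduced w : reduced (norm w).
Proof. by elim: w => [|x w IH] //=; apply: push_reduced. Qed.

Definition F2 : Type := {w : seq letter | reduced w}.

Definition F2mul (u v : F2) : F2 :=
  exist _ (norm (proj1_sig u ++ proj1_sig v)) (norm_reduced _).
Definition F2one : F2 := exist _ [::] (erefl true).
Definition F2inv (u : F2) : F2 :=
  exist _ (norm (rev (map linv (proj1_sig u)))) (norm_reduced _).

(* Main.v *)
From HB Require Import structures.
Require Import Defs.
From mathcomp Require Import all_boot.

Set Implicit Arguments. Unset Strict Implicit. Unset Printing Implicit Defensive.

Lemma linvK l : linv (linv l) = l.
Proof. by case: l => a b; rewrite /linv /= negbK. Qed.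

Lemma push_cancel x z : reduced z -> push x (push (linv x) z) = z.
Proof.
case: z => [|y z] /=; first by rewrite eqxx.
rewrite linvK; case: eqP => [->|_] Hz.
  case: z Hz => [|w z] /=; first by [].
  by case/andP => H _; rewrite (negbTE H).
by rewrite /= eqxx.
Qed.

Lemma reduced_fold t u : reduced t -> reduced (foldr push t u).
Proof. by move=> Ht; elim: u => [|x u IH] //=; apply: push_reduced. Qed.

Lemma push_fold x w t : reduced t -> foldr push t (push x w) = push x (foldr push t w).
Proof.
move=> Ht; case: w => [|y w] //=.
case: eqP => [->|_] //=.
by rewrite push_cancel // reduced_fold.
Qed.

Lemma norm_id w : reduced w -> norm w = w.
Proof.
elim: w => [|x w IH] //= Hw.
have Hw' : reduced w by case: w Hw {IH} => //= y w /andP [].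
rewrite IH //; case: w Hw Hw' {IH} => //= y w /andP [H _] _.
by rewrite (negbTE H).
Qed.

Lemma norm_fold t u : reduced t -> foldr push t (norm u) = foldr push t u.
Proof.
move=> Ht; elim: u => [|x u IH] //=.
by rewrite push_fold // IH.
Qed.

Lemma norm_cat u v : norm (u ++ v) = foldr push (norm v) u.
Proof. by rewrite /norm foldr_cat. Qed.

Lemma normCl u v : norm (norm u ++ v) = norm (u ++ v).
Proof. by rewrite !norm_cat norm_fold // norm_reduced. Qed.

Lemma normCr u v : norm (u ++ norm v) = norm (u ++ v).
Proof. by rewrite !norm_cat (norm_id (norm_reduced v)). Qed.

Lemma cancel_l g t : norm (rev (map linv g) ++ g ++ t) = norm t.
Proof.
elim: g => [|x g IH] //=.
rewrite rev_cons -cats1 -catA norm_cat /=.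
have := push_cancel (linv x) (norm_reduced (g ++ t)); rewrite linvK => ->.
by rewrite -norm_cat.
Qed.

Lemma cancel_r g t : norm (g ++ rev (map linv g) ++ t) = norm t.
Proof.
have E : rev (map linv (rev (map linv g))) = g.
  by rewrite map_rev revK -map_comp -[RHS](map_id g); apply: eq_map => l /=; rewrite linvK.
by have := cancel_l (rev (map linv g)) t; rewrite E.
Qed.

Lemma F2eq (u v : F2) : proj1_sig u = proj1_sig v -> u = v.
Proof.
case: u v => u pu [v pv] /= E; subst v.
by rewrite (eq_irrelevance pu pv).
Qed.

Lemma F2A u v w : F2mul (F2mul u v) w = F2mul u (F2mul v w).
Proof. by apply: F2eq; rewrite /F2mul /F2inv /F2one; cbn [proj1_sig]; rewrite normCl normCr catA. Qed.
Lemma F2_1l v : F2mul F2one v = v.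
Proof. by apply: F2eq; rewrite /F2mul /F2inv /F2one; cbn [proj1_sig]; rewrite norm_id //; case: v. Qed.
Lemma F2_1r v : F2mul v F2one = v.
Proof. by apply: F2eq; rewrite /F2mul /F2inv /F2one; cbn [proj1_sig]; rewrite cats0 norm_id //; case: v. Qed.
Lemma F2KV g t : F2mul (F2inv g) (F2mul g t) = t.
Proof. by apply: F2eq; rewrite /F2mul /F2inv /F2one; cbn [proj1_sig]; rewrite (normCl (rev (map linv (proj1_sig g)))) normCr cancel_l norm_id //; case: t. Qed.
Lemma F2VK g t : F2mul g (F2mul (F2inv g) t) = t.
Proof. by apply: F2eq; rewrite /F2mul /F2inv /F2one; cbn [proj1_sig]; rewrite normCr norm_cat (normCl (rev (map linv (proj1_sig g)))) -norm_cat cancel_r norm_id //; case: t. Qed.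

Definition Aw : F2 := exist _ [:: (false,false)] (erefl true).
Definition Bw : F2 := exist _ [:: (true,false)] (erefl true).

Section Gen.
Variables (T : Type) (mul : T -> T -> T) (one : T) (inv : T -> T).
Hypotheses (mA : forall x y z, mul (mul x y) z = mul x (mul y z))
  (m1l : forall x, mul one x = x) (m1r : forall x, mul x one = x)
  (mKV : forall g t, mul (inv g) (mul g t) = t)
  (mVK : forall g t, mul g (mul (inv g) t) = t).

Definition lvg x y (l : letter) := let g := if l.1 then y else x in if l.2 then inv g else g.
Definition evg x y (w : seq letter) := foldr (fun l acc => mul (lvg x y l) acc) one w.
Definition Eg x y (u : F2) := evg x y (proj1_sig u).
Definition ghom (f : F2 -> T) := forall u v, f (F2mul u v) = mul (f u) (f v).

Lemma lv_cancel x y l t : mul (lvg x y l) (mul (lvg x y (linv l)) t) = t.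
Proof. by case: l => [i []]; rewrite /lvg /linv /=. Qed.

Lemma evg_push x y l w : evg x y (push l w) = mul (lvg x y l) (evg x y w).
Proof.
case: w => [|z w] //=.
by case: eqP => [->|_] //=; rewrite lv_cancel.
Qed.

Lemma evg_norm x y w : evg x y (norm w) = evg x y w.
Proof. by elim: w => [|l w IH] //=; rewrite evg_push IH. Qed.

Lemma evg_cat x y u v : evg x y (u ++ v) = mul (evg x y u) (evg x y v).
Proof. by elim: u => [|l u IH] /=; rewrite ?m1l // IH mA. Qed.

Lemma Eg_hom x y : ghom (Eg x y).
Proof. by move=> u v; rewrite /Eg /= evg_norm evg_cat. Qed.

Lemma inv_uniq p q : mul p q = one -> p = inv q.
Proof.
move=> H; have H1 : mul q (inv q) = one by rewrite -(m1r (inv q)) mVK.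
by rewrite -(m1r p) -H1 -mA H m1l.
Qed.

Lemma inv_uniqr p q : mul p q = one -> q = inv p.
Proof. by move=> H; rewrite -(mKV p q) H m1r. Qed.

Lemma hom_one f : ghom f -> f F2one = one.
Proof.
move=> hf; have E : f F2one = mul (f F2one) (f F2one) by rewrite -hf F2_1l.
move: E; set p := f F2one => E.
have H : mul (inv p) p = p by rewrite {2}E mKV.
by rewrite -[LHS]H -{2}(m1r p) mKV.
Qed.

Lemma hom_inv f : ghom f -> forall x, f (F2inv x) = inv (f x).
Proof.
move=> hf x; apply: inv_uniq; rewrite -hf -(F2_1r (F2mul _ _)).
by rewrite F2A F2KV hom_one.
Qed.

Lemma hom_uniq f : ghom f -> forall u, f u = Eg (f Aw) (f Bw) u.
Proof.
move=> hf [w]; elim: w => [|l w IH] pf.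
  by rewrite /Eg /= -(hom_one hf); congr f; apply: F2eq.
have pw : reduced w by case: w pf {IH} => //= ? ? /andP [].
have E : exist _ (l :: w) pf = F2mul (exist _ [:: l] (erefl true)) (exist _ w pw).
  apply: F2eq => /=; rewrite norm_id //.
  by case: w pw pf {IH} => //= z w' _ /andP [H _]; rewrite (negbTE H).
rewrite [in LHS]E hf IH /Eg /=; congr mul.
have Hinv : forall a b : F2, F2mul a b = F2one -> f b = inv (f a).
  by move=> a b H; apply: inv_uniqr; rewrite -hf H hom_one.
clear E IH pf pw; case: l => [[] []] /=.
- by rewrite /lvg /=; apply: Hinv; apply: F2eq.
- by [].
- by rewrite /lvg /=; apply: Hinv; apply: F2eq.
- by [].
Qed.

End Gen.

Inductive Z3 := Z0 | Z1 | Z2.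
Definition z3eq (a b : Z3) := match a, b with Z0,Z0|Z1,Z1|Z2,Z2 => true | _,_ => false end.
Lemma z3eqP : Equality.axiom z3eq.
Proof. by case; case; constructor. Qed.
HB.instance Definition _ := hasDecEq.Build Z3 z3eqP.
Definition zadd a b := match a with Z0 => b | Z1 => match b with Z0 => Z1 | Z1 => Z2 | Z2 => Z0 end
  | Z2 => match b with Z0 => Z2 | Z1 => Z0 | Z2 => Z1 end end.
Definition zneg a := match a with Z0 => Z0 | Z1 => Z2 | Z2 => Z1 end.
Definition G := (Z3 * bool)%type.
Definition Gmul (x y : G) : G := (zadd x.1 (if x.2 then zneg y.1 else y.1), x.2 (+) y.2).
Definition Gone : G := (Z0, false).
Definition Ginv (x : G) : G := if x.2 then x else (zneg x.1, false).
Definition Gl : seq G := [:: (Z0,false);(Z1,false);(Z2,false);(Z0,true);(Z1,true);(Z2,true)].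
Lemma Gassoc x y z : Gmul (Gmul x y) z = Gmul x (Gmul y z).
Proof. by case: x => [[] []]; case: y => [[] []]; case: z => [[] []]. Qed.
Lemma G1l x : Gmul Gone x = x. Proof. by case: x => [[] []]. Qed.
Lemma G1r x : Gmul x Gone = x. Proof. by case: x => [[] []]. Qed.
Lemma GKV g t : Gmul (Ginv g) (Gmul g t) = t.
Proof. by case: g => [[] []]; case: t => [[] []]. Qed.
Lemma GVK g t : Gmul g (Gmul (Ginv g) t) = t.
Proof. by case: g => [[] []]; case: t => [[] []]. Qed.

Definition L2 := [seq (x, y) | x <- Gl, y <- Gl].
Lemma L2_all p : p \in L2.
Proof. by case: p => [[[] []] [[] []]]. Qed.
Lemma L2_uniq : uniq L2. Proof. reflexivity. Qed.

Definition Ww : seq letter := [:: (false,false);(false,false);(true,false);(true,false);(true,false)].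
Definition W : F2 := exist _ Ww (erefl true).
Definition Aiw : F2 := exist _ [:: (false,true)] (erefl true).

Definition EG (p : G * G) := Eg Gmul Gone Ginv p.1 p.2.

Lemma c12 : count (fun p : G * G => EG p W == Gone) L2 = 12.
Proof. reflexivity. Qed.
Lemma c6 : count (fun p : G * G => p.1 == Gone) L2 = 6.
Proof. reflexivity. Qed.

Definition phi := Eg F2mul F2one F2inv W Bw.
Definition psi := Eg F2mul F2one F2inv Aiw Aw.

Lemma F2hom_one f : ghom F2mul f -> f F2one = F2one.
Proof. move=> hf; eapply hom_one; eauto using F2A, F2_1l, F2_1r, F2KV, F2VK. Qed.
Lemma F2hom_inv f : ghom F2mul f -> forall x, f (F2inv x) = F2inv (f x).
Proof. move=> hf; eapply hom_inv; eauto using F2A, F2_1l, F2_1r, F2KV, F2VK. Qed.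

Lemma phi_hom : ghom F2mul phi.
Proof. eapply Eg_hom; eauto using F2A, F2_1l, F2_1r, F2KV, F2VK. Qed.
Lemma psi_hom : ghom F2mul psi.
Proof. eapply Eg_hom; eauto using F2A, F2_1l, F2_1r, F2KV, F2VK. Qed.
Lemma phiA : phi Aw = W. Proof. by apply: F2eq. Qed.
Lemma psiW : psi W = Aw. Proof. by apply: F2eq. Qed.

Lemma hom_gen f sA sB : ghom F2mul f -> (forall x, inlist x sA -> gen F2mul F2one F2inv sB (f x)) ->
  forall x, gen F2mul F2one F2inv sA x -> gen F2mul F2one F2inv sB (f x).
Proof.
move=> hf H x; elim => [y Hy||y z _ Hy _ Hz|y _ Hy].
- exact: H.
- rewrite (F2hom_one hf); exact: gen_one.
- rewrite hf; exact: gen_mul.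
- rewrite (F2hom_inv hf); exact: gen_inv.
Qed.

Lemma hom_fix f s : ghom F2mul f -> (forall x, inlist x s -> f x = x) ->
  forall x, gen F2mul F2one F2inv s x -> f x = x.
Proof.
move=> hf H x; elim => [y Hy||y z _ Hy _ Hz|y _ Hy].
- exact: H.
- exact: (F2hom_one hf).
- by rewrite hf Hy Hz.
- by rewrite (F2hom_inv hf) Hy.
Qed.

Theorem mainTheorem6 : ~ weakly_homogeneous F2mul F2one F2inv.
Proof.
move=> WH.
have hpp : ghom F2mul (fun x => psi (phi x)).
  by move=> u v; rewrite phi_hom psi_hom.
have hqq : ghom F2mul (fun x => phi (psi x)).
  by move=> u v; rewrite psi_hom phi_hom.
have HA : forall x, inlist x [:: Aw] -> x = Aw by move=> x [<-|[]].
have HW : forall x, inlist x [:: W] -> x = W by move=> x [<-|[]].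
have HW' : gen F2mul F2one F2inv [:: W] W by apply: gen_elt; left.
have HA' : gen F2mul F2one F2inv [:: Aw] Aw by apply: gen_elt; left.
have H1 : forall x, inlist x [:: Aw] -> gen F2mul F2one F2inv [:: W] (phi x).
  by move=> x Hx; rewrite (HA x Hx) phiA.
have H2 : forall x, inlist x [:: W] -> gen F2mul F2one F2inv [:: Aw] (psi x).
  by move=> x Hx; rewrite (HW x Hx) psiW.
have H3 : forall x, inlist x [:: Aw] -> psi (phi x) = x.
  by move=> x Hx; rewrite (HA x Hx) phiA psiW.
have H4 : forall x, inlist x [:: W] -> phi (psi x) = x.
  by move=> x Hx; rewrite (HW x Hx) psiW phiA.
have [h [[hh [g [_ hg]]] hext]] := WH [:: Aw] [:: W] phi psi
  (hom_gen phi_hom H1) (hom_gen psi_hom H2) (hom_fix hpp H3) (hom_fix hqq H4)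
  (fun x y _ _ => phi_hom x y)
  (ex_intro _ phi (conj phi_hom (fun _ _ => erefl)))
  (ex_intro _ psi (conj psi_hom (fun _ _ => erefl))).
have hA : h Aw = W by rewrite hext ?phiA //; apply: gen_elt; left.
pose Phi (p : G * G) := (EG p (h Aw), EG p (h Bw)).
have key : forall p u, EG p (h u) = EG (Phi p) u.
  move=> p u.
  have hG : ghom Gmul (fun u => EG p (h u)).
    by move=> a b; rewrite hh /EG; eapply Eg_hom; eauto using Gassoc, G1l, G1r, GKV, GVK.
  exact: (@hom_uniq G Gmul Gone Ginv G1r GKV (fun u => EG p (h u)) hG u).
have Phi_inj : injective Phi.
  move=> p q e.
  have E : forall u, EG p u = EG q u by move=> u; rewrite -(hg u) !key e.
  have := E Aw; have := E Bw; rewrite /EG /Eg /= /lvg /= !G1r.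
  by case: p {e E} => ? ?; case: q => ? ? /= -> ->.
have Hperm : perm_eq (map Phi L2) L2.
  apply: uniq_perm; rewrite ?map_inj_uniq ?L2_uniq //.
  apply: (uniq_min_size (s1 := map Phi L2) (s2 := L2) _ _ _).2.
  - by rewrite map_inj_uniq ?L2_uniq.
  - by move=> x _; apply: L2_all.
  - by rewrite size_map.
have : count (fun p : G * G => EG p W == Gone) L2 = count (fun p : G * G => p.1 == Gone) L2.
  rewrite -[in RHS](permP Hperm) count_map; apply: eq_count => p /=.
  by rewrite -hA.
by rewrite c12 c6.
Qed.
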